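(* For $\mu\in(-1,0.55]$, all periodic orbits of the Sprott vector field $f_\mu$ are contained in $K_\mu$, every nonstationary periodic orbit is contained in $K_\mu\setminus\Delta$, and every nonstationary periodic orbit $\gamma$ satisfies $\frac{1}{2\pi}\int_\gamma d\theta\le-1$. For $\mu=-1$, $f_{-1}$ has no nonstationary periodic orbits.
   Context: The Sprott vector field $f_\mu$ on $\mathbb{R}^3$ is $\dot x=y^2-z-\mu x$, $\dot y=z^2-x-\mu y$, $\dot z=x^2-y-\mu z$. $\Delta:=\mathrm{span}\{(1,1,1)\}$; $\|\mathbf{x}_\perp\|^2=\tfrac23(x^2+y^2+z^2-xy-yz-zx)$; $d\theta:=\frac{1}{\sqrt3}\frac{(z-y)dx+(x-z)dy+(y-x)dz}{\|\mathbf{x}_\perp\|^2}$ on $\mathbb{R}^3\setminus\Delta$; $\int_\gamma$ is over the orbit traversed once in the flow direction. $V(\mathbf{x}):=x+y+z$, $r_\mu:=\|\mathbf{x}-\frac{1+\mu}{2}(1,1,1)\|$, $c:=\frac{3^{3/4}+3^{1/4}}{2}$, and for $\mu>-1$, $K_\mu:=\{\mathbf{x}\colon V(\mathbf{x})\ge r_\mu-c(1+\mu)\arctan(\frac{2r_\mu}{3^{1/4}(1+\mu)})-\frac{\sqrt3}{2}(1+\mu)+c(1+\mu)\arctan(3^{1/4})\}\cap V^{-1}[0,3(1+\mu)]$. *)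

(* Defs.v *)
From Stdlib Require Import Reals Lra.
Open Scope R_scope.

Definition sprott_fx (mu x y z : R) : R := y ^ 2 - z - mu * x.
Definition sprott_fy (mu x y z : R) : R := z ^ 2 - x - mu * y.
Definition sprott_fz (mu x y z : R) : R := x ^ 2 - y - mu * z.

Definition is_solution (mu : R) (x y z : R -> R) : Prop :=
  forall t : R,
    derivable_pt_lim x t (sprott_fx mu (x t) (y t) (z t)) /\
    derivable_pt_lim y t (sprott_fy mu (x t) (y t) (z t)) /\
    derivable_pt_lim z t (sprott_fz mu (x t) (y t) (z t)).

Definition is_period (x y z : R -> R) (T : R) : Prop :=
  forall t : R, x (t + T) = x t /\ y (t + T) = y t /\ z (t + T) = z t.

(* A periodic solution (its image is a periodic orbit). *)
Definition periodic_solution (mu : R) (x y z : R -> R) : Prop :=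
  is_solution mu x y z /\ exists T : R, 0 < T /\ is_period x y z T.

Definition stationary (x y z : R -> R) : Prop :=
  forall t : R, x t = x 0 /\ y t = y 0 /\ z t = z 0.

(* T is the minimal (prime) period: traversing [0,T] runs the orbit once. *)
Definition minimal_period (x y z : R -> R) (T : R) : Prop :=
  0 < T /\ is_period x y z T /\
  forall s : R, 0 < s < T -> ~ is_period x y z s.

Definition in_Delta (x y z : R) : Prop := x = y /\ y = z.

Definition perp_norm2 (x y z : R) : R :=
  2 / 3 * (x ^ 2 + y ^ 2 + z ^ 2 - x * y - y * z - z * x).

Definition dtheta (x y z u v w : R) : R :=
  / sqrt 3 * (((z - y) * u + (x - z) * v + (y - x) * w) / perp_norm2 x y z).

Definition V (x y z : R) : R := x + y + z.

Definition r_mu (mu x y z : R) : R :=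
  let a := (1 + mu) / 2 in
  sqrt ((x - a) ^ 2 + (y - a) ^ 2 + (z - a) ^ 2).

Definition c_const : R := (Rpower 3 (3 / 4) + Rpower 3 (1 / 4)) / 2.

Definition in_K (mu x y z : R) : Prop :=
  let r := r_mu mu x y z in
  V x y z >= r - c_const * (1 + mu) * atan (2 * r / (Rpower 3 (1 / 4) * (1 + mu)))
             - sqrt 3 / 2 * (1 + mu)
             + c_const * (1 + mu) * atan (Rpower 3 (1 / 4))
  /\ 0 <= V x y z <= 3 * (1 + mu).

Definition dtheta_along (mu : R) (x y z : R -> R) (t : R) : R :=
  dtheta (x t) (y t) (z t)
    (sprott_fx mu (x t) (y t) (z t))
    (sprott_fy mu (x t) (y t) (z t))
    (sprott_fz mu (x t) (y t) (z t)).

(* Main.v *)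
Require Import Defs.
From Stdlib Require Import Reals Lra Psatz ZArith Lia.
From Coquelicot Require Import Coquelicot.
Open Scope R_scope.

Ltac fixD := repeat match goal with |- context [Derive (fun u => ?f u) ?t] =>
  change (Derive (fun u => f u) t) with (Derive f t) end.

Lemma derive_cont (h : R -> R) t l : is_derive h t l -> continuity_pt h t.
Proof. intros H. apply derivable_continuous_pt. exists l. apply is_derive_Reals; auto. Qed.

Lemma mvt_lim (h h' : R -> R) a b : a < b ->
  (forall t, a < t < b -> is_derive h t (h' t)) ->
  (forall t, a <= t <= b -> continuity_pt h t) ->
  exists c, a < c < b /\ h b - h a = h' c * (b - a).
Proof.
  intros Hab Hd Hc.
  assert (pr1 : forall c, a < c < b -> derivable_pt h c).
  { intros c Hc'. exists (h' c). apply is_derive_Reals. auto. }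
  assert (pr2 : forall c, a < c < b -> derivable_pt id c).
  { intros c _. apply derivable_pt_id. }
  destruct (MVT h id a b pr1 pr2 Hab Hc) as [c [P Hm]].
  { intros c _. apply derivable_continuous_pt. apply derivable_pt_id. }
  exists c. split; auto.
  rewrite (derive_pt_eq_0 h c (h' c) (pr1 c P)) in Hm.
  2: { apply is_derive_Reals. auto. }
  rewrite (derive_pt_eq_0 id c 1 (pr2 c P)) in Hm.
  2: { apply derivable_pt_lim_id. }
  unfold id in Hm. lra.
Qed.

Lemma mono_le (h h' : R -> R) a b : a <= b ->
  (forall t, a < t < b -> is_derive h t (h' t)) ->
  (forall t, a <= t <= b -> continuity_pt h t) ->
  (forall t, a < t < b -> 0 <= h' t) -> h a <= h b.
Proof.
  intros Hab Hd Hc Hp. destruct (Req_dec a b) as [->|Hne]; [lra|].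
  destruct (mvt_lim h h' a b ltac:(lra) Hd Hc) as [c [Hc1 Hm]].
  specialize (Hp c Hc1). nra.
Qed.

Lemma mono_lt (h h' : R -> R) a b : a < b ->
  (forall t, a < t < b -> is_derive h t (h' t)) ->
  (forall t, a <= t <= b -> continuity_pt h t) ->
  (forall t, a < t < b -> h' t < 0) -> h b < h a.
Proof.
  intros Hab Hd Hc Hp.
  destruct (mvt_lim h h' a b Hab Hd Hc) as [c [Hc1 Hm]].
  specialize (Hp c Hc1). nra.
Qed.

Definition per (h : R -> R) (T : R) := forall t, h (t + T) = h t.

Lemma per_nat h T : per h T -> forall (n : nat) t, h (t + INR n * T) = h t.
Proof.
  intros Hp n. induction n as [|n IH]; intros t.
  - simpl. f_equal. ring.
  - rewrite S_INR. replace (t + (INR n + 1) * T) with ((t + INR n * T) + T) by ring.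
    rewrite Hp. auto.
Qed.

Lemma per_Z h T : per h T -> forall (k : Z) t, h (t + IZR k * T) = h t.
Proof.
  intros Hp k t. destruct (Z_le_gt_dec 0 k) as [Hk|Hk].
  - destruct (Z_of_nat_complete k Hk) as [n ->]. rewrite <- INR_IZR_INZ. apply per_nat; auto.
  - assert (Hk' : (0 <= - k)%Z) by lia.
    destruct (Z_of_nat_complete (- k) Hk') as [n Hn].
    replace k with (- Z.of_nat n)%Z by lia. rewrite opp_IZR, <- INR_IZR_INZ.
    rewrite <- (per_nat h T Hp n (t + - INR n * T)). f_equal. ring.
Qed.

Lemma reduce T : 0 < T -> forall t, exists k : Z, 0 <= t + IZR k * T <= T.
Proof.
  intros HT t. destruct (archimed (- t / T)) as [H1 H2].
  exists (up (- t / T)).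
  assert (E : t + IZR (up (- t / T)) * T = T * (IZR (up (- t / T)) - (- t / T))) by (field; lra).
  rewrite E. split.
  - apply Rmult_le_pos; lra.
  - nra.
Qed.

Lemma reduce_before T : 0 < T -> forall t s, exists k : Z, t + IZR k * T <= s.
Proof.
  intros HT t s. destruct (reduce T HT (t - s)) as [k Hk]. exists (k - 1)%Z.
  rewrite minus_IZR. nra.
Qed.

Lemma per_max h T : 0 < T -> per h T -> (forall t, continuity_pt h t) ->
  exists t0, forall t, h t <= h t0.
Proof.
  intros HT Hp Hc. destruct (continuity_ab_maj h 0 T ltac:(lra) (fun c _ => Hc c)) as [M [HM _]].
  exists M. intros t. destruct (reduce T HT t) as [k Hk].
  rewrite <- (per_Z h T Hp k t). apply HM. auto.
Qed.

Lemma per_min h T : 0 < T -> per h T -> (forall t, continuity_pt h t) ->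
  exists t0, forall t, h t0 <= h t.
Proof.
  intros HT Hp Hc. destruct (continuity_ab_min h 0 T ltac:(lra) (fun c _ => Hc c)) as [M [HM _]].
  exists M. intros t. destruct (reduce T HT t) as [k Hk].
  rewrite <- (per_Z h T Hp k t). apply HM. auto.
Qed.

Lemma crit_max h t0 l : is_derive h t0 l -> (forall t, h t <= h t0) -> l = 0.
Proof.
  intros Hd Hm. assert (pr : derivable_pt h t0) by (exists l; apply is_derive_Reals; auto).
  rewrite <- (derive_pt_eq_0 h t0 l pr) by (apply is_derive_Reals; auto).
  apply (deriv_maximum h (t0 - 1) (t0 + 1)); try lra. intros; auto.
Qed.

Lemma crit_min h t0 l : is_derive h t0 l -> (forall t, h t0 <= h t) -> l = 0.
Proof.
  intros Hd Hm. assert (pr : derivable_pt h t0) by (exists l; apply is_derive_Reals; auto).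
  rewrite <- (derive_pt_eq_0 h t0 l pr) by (apply is_derive_Reals; auto).
  apply (deriv_minimum h (t0 - 1) (t0 + 1)); try lra. intros; auto.
Qed.

Lemma const_deriv h t l : (forall s, h s = h 0) -> is_derive h t l -> l = 0.
Proof.
  intros Hc Hd. assert (H2 : is_derive h t 0).
  { apply (is_derive_ext (fun _ => h 0)). intros s; auto. auto_derive; auto. }
  rewrite <- (is_derive_unique h t l Hd). apply is_derive_unique; auto.
Qed.

Lemma per_incr_const h h' T : 0 < T -> per h T ->
  (forall t, is_derive h t (h' t)) -> (forall t, 0 <= h' t) -> forall t, h t = h 0.
Proof.
  intros HT Hp Hd Hn.
  assert (Hmono : forall u v, u <= v -> h u <= h v).
  { intros u v Huv. apply (mono_le h h'); auto. intros s _. apply (derive_cont h s (h' s)); auto. }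
  intros t. destruct (reduce_before T HT 0 t) as [k1 Hk1]. destruct (reduce_before T HT t 0) as [k2 Hk2].
  apply Rle_antisym.
  - rewrite <- (per_Z h T Hp k2 t). apply Hmono. auto.
  - rewrite <- (per_Z h T Hp k1 0). apply Hmono. auto.
Qed.


Definition Cp (x y z : R) : R :=
  let m := (x+y+z)/3 in (x-m)*(y-m)^2 + (y-m)*(z-m)^2 + (z-m)*(x-m)^2.
Definition Cw (x y z : R) : R :=
  let m := (x+y+z)/3 in (x-m)^2*((y-m)-(x-m)) + (y-m)^2*((z-m)-(y-m)) + (z-m)^2*((x-m)-(z-m)).
Definition Sa (a x y z : R) : R := (x-a)^2+(y-a)^2+(z-a)^2.

Lemma Cp_bound x y z : (Cp x y z)^2 <= (perp_norm2 x y z)^3/6.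
Proof.
  unfold Cp, perp_norm2.
  set (m := (x+y+z)/3).
  set (px := x - m). set (py := y - m). set (pz := z - m).
  assert (E : 2 / 3 * (x ^ 2 + y ^ 2 + z ^ 2 - x * y - y * z - z * x) = px^2+py^2+pz^2)
    by (unfold px, py, pz, m; field).
  rewrite E.
  assert (Hs : px + py + pz = 0) by (unfold px, py, pz, m; field).
  assert (pz = - px - py) by lra. rewrite H.
  set (D := (px-py)*(py-(-px-py))*((-px-py)-px)). set (e3 := px*py*(-px-py)).
  assert (E2 : (px ^ 2 + py ^ 2 + (- px - py) ^ 2) ^ 3 / 6 - (px * py ^ 2 + py * (- px - py) ^ 2 + (- px - py) * px ^ 2) ^ 2
     = (D + 9*e3)^2/12) by (unfold D, e3; field).
  assert (0 <= (D + 9*e3)^2/12) by (apply Rmult_le_pos; [apply pow2_ge_0|lra]).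
  lra.
Qed.

Lemma Cw_bound x y z : (Cw x y z)^2 <= (perp_norm2 x y z)^3/2.
Proof.
  unfold Cw, perp_norm2.
  set (m := (x+y+z)/3).
  set (px := x - m). set (py := y - m). set (pz := z - m).
  assert (E : 2 / 3 * (x ^ 2 + y ^ 2 + z ^ 2 - x * y - y * z - z * x) = px^2+py^2+pz^2)
    by (unfold px, py, pz, m; field).
  rewrite E.
  assert (Hs : px + py + pz = 0) by (unfold px, py, pz, m; field).
  assert (pz = - px - py) by lra. rewrite H.
  set (D := (px-py)*(py-(-px-py))*((-px-py)-px)). set (e3 := px*py*(-px-py)).
  assert (E2 : (px ^ 2 + py ^ 2 + (- px - py) ^ 2) ^ 3 / 2 - (px^2*(py-px) + py^2*((-px-py)-py) + (-px-py)^2*(px-(-px-py)))^2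
     = 3*(3*e3 - D)^2/4) by (unfold D, e3; field).
  assert (0 <= 3*(3*e3 - D)^2/4) by (apply Rmult_le_pos; [apply Rmult_le_pos; [lra|apply pow2_ge_0]|lra]).
  lra.
Qed.

Lemma perp_nonneg x y z : 0 <= perp_norm2 x y z.
Proof. unfold perp_norm2. assert (E: x ^ 2 + y ^ 2 + z ^ 2 - x * y - y * z - z * x = ((x-y)^2+(y-z)^2+(z-x)^2)/2) by field.
  rewrite E. assert (0 <= (x-y)^2) by apply pow2_ge_0. assert (0 <= (y-z)^2) by apply pow2_ge_0. assert (0 <= (z-x)^2) by apply pow2_ge_0. lra. Qed.

Lemma perp_zero x y z : perp_norm2 x y z = 0 -> x = y /\ y = z.
Proof. unfold perp_norm2. intros H. assert (E: x ^ 2 + y ^ 2 + z ^ 2 - x * y - y * z - z * x = ((x-y)^2+(y-z)^2+(z-x)^2)/2) by field.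
  rewrite E in H. assert (0 <= (x-y)^2) by apply pow2_ge_0. assert (0 <= (y-z)^2) by apply pow2_ge_0. assert (0 <= (z-x)^2) by apply pow2_ge_0.
  assert ((x-y)^2 = 0) by lra. assert ((y-z)^2 = 0) by lra. split; nra. Qed.

Lemma perp_pos x y z : ~ (x = y /\ y = z) -> 0 < perp_norm2 x y z.
Proof. intros H. destruct (Rle_lt_or_eq_dec 0 _ (perp_nonneg x y z)) as [h|h]; auto.
  exfalso. apply H, perp_zero. auto. Qed.

Section Ids.
Variables (mu x y z : R).
Let a := (1+mu)/2.
Let n := (x+y+z)/3 - a.
Let fx := sprott_fx mu x y z.
Let fy := sprott_fy mu x y z.
Let fz := sprott_fz mu x y z.

Lemma id_V : fx + fy + fz = x^2+y^2+z^2 - (1+mu)*(x+y+z).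
Proof. unfold fx, fy, fz, sprott_fx, sprott_fy, sprott_fz. ring. Qed.

Lemma id_Vr : fx + fy + fz = Sa a x y z - 3*a^2.
Proof. unfold fx, fy, fz, sprott_fx, sprott_fy, sprott_fz, Sa, a. field. Qed.

Lemma id_S : Sa a x y z = 3*n^2 + perp_norm2 x y z.
Proof. unfold Sa, n, perp_norm2, a. field. Qed.

Lemma id_L : 2/3*(2*x*fx + 2*y*fy + 2*z*fz - (fx*y + x*fy) - (fy*z + y*fz) - (fz*x + z*fx))
   = 2*perp_norm2 x y z*(3/2 - 3*a - n) + 2*Cp x y z.
Proof. unfold fx, fy, fz, sprott_fx, sprott_fy, sprott_fz, perp_norm2, Cp, n, a. field. Qed.

Lemma id_P : (x-a)*fx + (y-a)*fy + (z-a)*fz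
   = 3*n^3 + Cp x y z - 3/2*mu*perp_norm2 x y z - 3*a^2*n.
Proof. unfold fx, fy, fz, sprott_fx, sprott_fy, sprott_fz, perp_norm2, Cp, n, a. field. Qed.

Lemma id_N : (z-y)*fx + (x-z)*fy + (y-x)*fz = -(3/2)*perp_norm2 x y z*(1 + 2*(x+y+z)/3) + Cw x y z.
Proof. unfold fx, fy, fz, sprott_fx, sprott_fy, sprott_fz, perp_norm2, Cw. field. Qed.
End Ids.

Lemma X0 a r s3 : 1.732 < s3 -> s3^2 = 3 -> 1/3 <= a <= 0.775 -> s3*a <= r ->
  0.59*r - 1.5 + 3*a < 0 ->
  a^4 <= 4/3 * (r - (0.59*r - 1.5 + 3*a)) * ((0.59*r - 1.5 + 3*a)*r^2 + s3*a^2*r).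
Proof. intros.

assert (r < 0.85) by lra. assert (1.732*a <= r) by nra. assert (a < 0.38) by lra.
assert (Hq: 0.08 <= 0.59*r^2 - (1.5 - 3*a)*r + 1.732*a^2).
{ assert (0.08 <= 1.732*a^2 - (1.5-3*a)^2/2.36) by nra.
  assert (0 <= 0.59*(r - (1.5-3*a)/1.18)^2) by (apply Rmult_le_pos; [lra| apply pow2_ge_0]). nra. }
assert (HX: 0.08*r <= (0.59*r - 1.5 + 3*a)*r^2 + s3*a^2*r).
{ assert (0 <= (s3 - 1.732)*a^2*r) by (apply Rmult_le_pos; [apply Rmult_le_pos|]; nra). nra. }
assert (Hrk: 1.5 - 2.3*a <= r - (0.59*r - 1.5 + 3*a)) by nra.
assert (0.04 <= 0.08 * r) by nra.
assert (0 < 1.5 - 2.3*a) by lra.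
assert (0.04*(1.5-2.3*a) <= (r - (0.59*r - 1.5 + 3*a))*((0.59*r - 1.5 + 3*a)*r^2 + s3*a^2*r)) by nra.
assert (a^4 <= 0.38^3*a) by (assert (a^3 <= 0.38^3) by (apply pow_incr; lra); nra).
nra.
Qed.
Lemma I2 a n r s3 : 1.732 < s3 -> s3^2 = 3 -> 1/3 <= a <= 0.775 -> -a <= n <= a -> s3*a <= r -> 3*n <= s3*r -> -3*n <= s3*r ->
  0 <= 0.59* r*(r^2 - 3*n^2) + 3*n^2*(r-n) + a^2*(s3*r + 3*n) - (1.5-3*a)*(r^2 - 3*n^2).
Proof. intros.
assert (0 <= r^2 - 3*n^2) by nra.
assert (0 <= r) by nra.
destruct (Rle_dec 0 (0.59*r - 1.5 + 3*a)).
- assert (0 <= s3*r + 3*n) by lra. assert (0 <= r - n) by nra. nra.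
- apply Rnot_le_lt in n0.
  assert (E: 0.59* r*(r^2 - 3*n^2) - (1.5-3*a)*(r^2 - 3*n^2) >= (0.59*r - 1.5 + 3*a)* r^2 - 3*(0.59*r - 1.5 + 3*a)*n^2) by nra.
  assert (HX := X0 a r s3 H H0 H1 H3 ltac:(lra)).
  set (k := 0.59*r - 1.5 + 3*a) in *.
  assert (1.732*a <= r) by nra. assert (Hk: 0 < r - k) by (unfold k in *; lra).
  destruct (Rle_dec 0 n).
  + assert (0 <= s3*a^2*r + k*r^2) by (unfold k in *; nra).
    assert (0 <= r - n) by nra. assert (0 <= n^2*(r-n)) by (apply Rmult_le_pos; nra).
    assert (0<= - k * n^2) by nra. nra.
  + apply Rnot_le_lt in n1.
    assert (HZ: 4*(r-k)/3 * (k*r^2 + s3*a^2*r + 3*(r-k)*n^2 + 3*a^2*n) = (2*(r-k)*(-n) - a^2)^2 + (4/3*(r-k)*(k*r^2 + s3*a^2*r) - a^4)) by (unfold k; field).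
    assert (0 <= k*r^2 + s3*a^2*r + 3*(r-k)*n^2 + 3*a^2*n).
    { assert (0 <= (2*(r-k)*(-n) - a^2)^2) by apply pow2_ge_0.
      assert (0 < 4*(r-k)/3) by lra.
      apply (Rmult_le_reg_l (4*(r-k)/3)); [lra|]. rewrite Rmult_0_r, HZ. lra. }
    assert (0 <= n^2 * (-n)) by (apply Rmult_le_pos; nra).
    nra.
Qed.

Lemma I2full a n Lp c r s3 : 1.732 < s3 -> s3^2 = 3 -> 1/3 <= a <= 0.775 -> -a <= n <= a ->
  0 <= Lp -> c^2 <= Lp^3/6 -> 0 <= r -> r^2 = 3*n^2 + Lp -> 3*a^2 <= r^2 ->
  3*n^3 + c - 3/2*(2*a-1)*Lp - 3*a^2*n <= r^3 + s3*a^2*r.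
Proof.
  intros Hs Hs2 Ha Hn HL Hc Hr Hr2 Hra.
  assert (Hc2 : c <= 0.41*r*Lp).
  { destruct (Rle_dec c 0). { assert (0 <= r*Lp) by (apply Rmult_le_pos; auto). nra. }
    assert (Lp <= r^2) by nra.
    assert (Lp^3 <= Lp^2 * r^2) by (assert (0 <= Lp^2) by nra; nra).
    assert (0 <= 0.41*r*Lp) by (assert (0 <= r*Lp) by (apply Rmult_le_pos; auto); nra).
    assert (c^2 <= (0.41*r*Lp)^2) by nra. nra. }
  assert (Hsa : s3*a <= r) by nra.
  assert (Hn1 : 3*n <= s3*r) by nra.
  assert (Hn2 : -3*n <= s3*r) by nra.
  pose proof (I2 a n r s3 ltac:(lra) Hs2 Ha Hn Hsa Hn1 Hn2) as HI.
  assert (ELp : Lp = r^2 - 3*n^2) by lra. subst Lp.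
  nra.
Qed.

Lemma I3 a n Lp c : 0 < a <= 1/3 -> -a <= n <= a -> 0 < Lp -> c^2 <= Lp^3/6 ->
  0 < 2*Lp*(3/2 - 3*a - n) + 2*c + 3/4*(3*n^2 + Lp - 3*a^2)*Lp.
Proof.
  intros Ha Hn HL Hc.
  set (Y0 := 3/2 - 3*a - n + 3/8*(3*n^2 - 3*a^2)).
  assert (HY0 : 1/6 <= Y0).
  { assert (E: Y0 - (3/2 - 4*a) = (a - n)*(1 - 9/8*(a+n))) by (unfold Y0; field).
    assert (0 <= (a - n)*(1 - 9/8*(a+n))) by (apply Rmult_le_pos; lra). lra. }
  set (Y := Y0 + 3/8*Lp).
  assert (EY : 2*Lp*(3/2 - 3*a - n) + 2*c + 3/4*(3*n^2 + Lp - 3*a^2)*Lp = 2*(Lp*Y + c))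
    by (unfold Y, Y0; field).
  rewrite EY.
  assert (HY : Lp/6 < Y^2).
  { unfold Y. assert (9/64*Lp^2 - Lp/24 + 1/36 > 0) by nra. nra. }
  assert (0 < Y) by (unfold Y; lra).
  assert (c^2 < (Lp*Y)^2).
  { assert (Lp^3/6 < Lp^2*Y^2) by (assert (0 < Lp^2) by nra; nra). nra. }
  assert (0 < Lp*Y) by nra.
  nra.
Qed.

Lemma W2a V : 0 <= V <= 4.65 -> 
   4*(1.7321*1.55+V)^2*(V^2+2*2.7321*1.55*V) < (18+24*V+22/3*V^2-1.55*(6+4*1.7321)*V)^2.
Proof. intros. nra. Qed.

Lemma I4 r V b s3 : 1.732 < s3 < 1.7321 -> s3^2 = 3 -> 0 < b <= 1.55 -> 0 <= V <= 3*b -> 0 <= r ->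
  (r <= s3*b/2 \/ 4*r^2 - 4*r*(s3*b+V) + 3*b^2 - 2*V*b <= 0) ->
  r^2 - (V - 3*b/2)^2/3 < 2*(3/2+V)^2.
Proof.
  intros Hs Hs2 Hb HV Hr [H|H].
  - assert (r <= 1.35) by nra. nra.
  - set (A := s3*b + V). set (D2 := V^2 + 2*(s3+1)*b*V).
    set (W := 18 + 24*V + 22/3*V^2 - b*V*(6+4*s3)).
    assert (HD2 : 0 <= D2) by (unfold D2; assert (0 <= b*V) by nra; nra).
    set (D := sqrt D2).
    assert (HD : 0 <= D) by apply sqrt_pos.
    assert (HDD : D^2 = D2) by (unfold D; rewrite <- Rsqr_pow2; apply Rsqr_sqrt; auto).
    assert (HrD : 2*r <= A + D).
    { assert ((2*r - A)^2 <= D2) by (unfold A, D2; nra).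
      destruct (Rle_dec (2*r - A) 0). lra. nra. }
    assert (HA : 0 <= A) by (unfold A; nra).
    assert (H4 : 4*r^2 <= (A+D)^2) by nra.
    assert (EW : 4*(2*(3/2+V)^2 + (V - 3*b/2)^2/3) - A^2 - D2 = W + (3 - s3^2)*b^2) by (unfold W, A, D2; field).
    rewrite Hs2 in EW.
    assert (bV1 : b*V*(6+4*s3) <= 1.55*V*(6+4*1.7321)) by (apply Rmult_le_compat; nra).
    assert (HW : 0 < W) by (unfold W; nra).
    assert (HA2 : A^2 <= (1.7321*1.55+V)^2) by (unfold A; apply pow_incr; nra).
    assert (HD2b : D2 <= V^2+2*2.7321*1.55*V) by (unfold D2; assert (0 <= b*V) by nra; nra).
    assert (HWb : 18+24*V+22/3*V^2-1.55*(6+4*1.7321)*V <= W) by (unfold W; lra).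
    assert (HWb0 : 0 < 18+24*V+22/3*V^2-1.55*(6+4*1.7321)*V) by nra.
    pose proof (W2a V ltac:(lra)).
    assert (4*A^2*D2 < W^2).
    { assert (4*A^2*D2 <= 4*(1.7321*1.55+V)^2*(V^2+2*2.7321*1.55*V)).
      { apply Rmult_le_compat; try nra. }
      assert ((18+24*V+22/3*V^2-1.55*(6+4*1.7321)*V)^2 <= W^2) by (apply pow_incr; lra).
      lra. }
    assert (2*A*D < W).
    { assert ((2*A*D)^2 < W^2) by (replace ((2*A*D)^2) with (4*A^2*D^2) by ring; rewrite HDD; lra).
      assert (0 <= 2*A*D) by nra. nra. }
    nra.
Qed.


Lemma sol_der mu x y z : is_solution mu x y z -> forall t,
  is_derive x t (sprott_fx mu (x t) (y t) (z t)) /\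
  is_derive y t (sprott_fy mu (x t) (y t) (z t)) /\
  is_derive z t (sprott_fz mu (x t) (y t) (z t)).
Proof. intros H t. destruct (H t) as [h1 [h2 h3]]. refine (conj _ (conj _ _)); apply is_derive_Reals; auto. Qed.

Lemma per_comp (F : R -> R -> R -> R) x y z T : is_period x y z T ->
  per (fun t => F (x t) (y t) (z t)) T.
Proof. intros H t. destruct (H t) as [h1 [h2 h3]]. rewrite h1, h2, h3. auto. Qed.

Ltac solder Hs t :=
  let h1 := fresh in let h2 := fresh in let h3 := fresh in
  destruct (sol_der _ _ _ _ Hs t) as [h1 [h2 h3]];
  auto_derive; [repeat split; eexists; eassumption | fixD;
    rewrite (is_derive_unique _ _ _ h1), (is_derive_unique _ _ _ h2), (is_derive_unique _ _ _ h3)].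

Section Sol.
Variables (mu : R) (x y z : R -> R).
Hypothesis Hs : is_solution mu x y z.

Definition Vt t := x t + y t + z t.
Definition Lt t := perp_norm2 (x t) (y t) (z t).

Lemma der_V t : is_derive Vt t (Sa ((1+mu)/2) (x t) (y t) (z t) - 3*((1+mu)/2)^2).
Proof. unfold Vt. solder Hs t. rewrite <- id_Vr. ring. Qed.

Lemma der_V2 t : is_derive Vt t ((x t)^2+(y t)^2+(z t)^2 - (1+mu)*Vt t).
Proof. unfold Vt. solder Hs t. rewrite <- id_V. ring. Qed.

Lemma der_L t : is_derive Lt t (2*Lt t*(3/2 - 3*((1+mu)/2) - ((x t+y t+z t)/3 - ((1+mu)/2))) + 2*Cp (x t) (y t) (z t)).
Proof. unfold Lt. rewrite <- id_L. unfold perp_norm2. solder Hs t. ring. Qed.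

Lemma der_S t : is_derive (fun t => Sa ((1+mu)/2) (x t) (y t) (z t)) t
  (2*(3*((x t+y t+z t)/3 - ((1+mu)/2))^3 + Cp (x t) (y t) (z t) - 3/2*mu*Lt t - 3*((1+mu)/2)^2*((x t+y t+z t)/3 - ((1+mu)/2)))).
Proof. unfold Lt. rewrite <- id_P. unfold Sa. solder Hs t. ring. Qed.

Lemma cont_x t : continuity_pt x t.
Proof. destruct (sol_der _ _ _ _ Hs t) as [h _]. eapply derive_cont; eauto. Qed.
Lemma cont_y t : continuity_pt y t.
Proof. destruct (sol_der _ _ _ _ Hs t) as [_ [h _]]. eapply derive_cont; eauto. Qed.
Lemma cont_z t : continuity_pt z t.
Proof. destruct (sol_der _ _ _ _ Hs t) as [_ [_ h]]. eapply derive_cont; eauto. Qed.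

Lemma cont_V t : continuity_pt Vt t.
Proof. eapply derive_cont. apply der_V. Qed.
Lemma cont_L t : continuity_pt Lt t.
Proof. eapply derive_cont. apply der_L. Qed.

End Sol.


Lemma perV x y z T : is_period x y z T -> per (Vt x y z) T.
Proof. intros H. apply (per_comp (fun a b c => a + b + c) x y z T H). Qed.
Lemma perL x y z T : is_period x y z T -> per (Lt x y z) T.
Proof. intros H. apply (per_comp perp_norm2 x y z T H). Qed.

Lemma sq3 a b c : (a+b+c)^2 <= 3*(a^2+b^2+c^2).
Proof. assert (0 <= (a-b)^2) by apply pow2_ge_0. assert (0 <= (b-c)^2) by apply pow2_ge_0. assert (0 <= (c-a)^2) by apply pow2_ge_0. nra. Qed.

Lemma R1 mu x y z : periodic_solution mu x y z -> 0 <= 1 + mu ->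
  forall t, 0 <= Vt x y z t <= 3*(1+mu).
Proof.
  intros [Hs [T [HT Hp]]] Hb t.
  pose proof (perV x y z T Hp) as HpV.
  destruct (per_max (Vt x y z) T HT HpV (cont_V mu x y z Hs)) as [t0 H0].
  destruct (per_min (Vt x y z) T HT HpV (cont_V mu x y z Hs)) as [t1 H1].
  pose proof (crit_max _ _ _ (der_V2 mu x y z Hs t0) H0) as E0.
  pose proof (crit_min _ _ _ (der_V2 mu x y z Hs t1) H1) as E1.
  assert (C0 : (Vt x y z t0)^2 <= 3*((x t0)^2+(y t0)^2+(z t0)^2)) by (unfold Vt; apply sq3).
  assert (C1 : (Vt x y z t1)^2 <= 3*((x t1)^2+(y t1)^2+(z t1)^2)) by (unfold Vt; apply sq3).
  specialize (H0 t). specialize (H1 t).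
  split.
  - assert (0 <= Vt x y z t1) by nra. lra.
  - assert (Vt x y z t0 <= 3*(1+mu)) by nra. lra.
Qed.

Lemma case_m1 x y z : periodic_solution (-1) x y z -> stationary x y z.
Proof.
  intros Hps. pose proof (R1 _ _ _ _ Hps ltac:(lra)) as HR.
  destruct Hps as [Hs _].
  assert (Hz : forall t, x t = 0 /\ y t = 0 /\ z t = 0).
  { intros t. assert (HV : forall s, Vt x y z s = Vt x y z 0) by (intros s; pose proof (HR s); pose proof (HR 0); lra).
    pose proof (const_deriv _ _ _ HV (der_V2 _ _ _ _ Hs t)) as E.
    pose proof (HR t).
    assert (E2 : (x t)^2 + (y t)^2 + (z t)^2 = 0) by nra.
    repeat split; nra. }
  intros t. destruct (Hz t) as [? [? ?]]. destruct (Hz 0) as [? [? ?]]. repeat split; congruence.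
Qed.

Lemma DL mu x y z : periodic_solution mu x y z -> 0 <= 1 + mu ->
  (forall t, x t = y t /\ y t = z t) -> stationary x y z.
Proof.
  intros Hps Hb HD. pose proof (R1 _ _ _ _ Hps Hb) as HR.
  destruct Hps as [Hs [T [HT Hp]]].
  assert (Hc : forall t, Vt x y z t = Vt x y z 0).
  { assert (Hc' : forall t, (fun s => - Vt x y z s) t = (fun s => - Vt x y z s) 0).
    { apply (per_incr_const (fun s => - Vt x y z s) (fun s => - ((x s)^2+(y s)^2+(z s)^2 - (1+mu)*Vt x y z s)) T HT).
      - intros s. simpl. rewrite (perV x y z T Hp s). auto.
      - intros s. apply (is_derive_opp (Vt x y z)). apply der_V2; auto.
      - intros s. destruct (HD s) as [e1 e2]. pose proof (HR s). unfold Vt in *.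
        rewrite <- e2, <- e1 in *. nra. }
    intros t. specialize (Hc' t). simpl in Hc'. lra. }
  intros t. pose proof (Hc t) as E. unfold Vt in E.
  destruct (HD t) as [e1 e2]. destruct (HD 0) as [e3 e4].
  repeat split; lra.
Qed.

Lemma Cp_zero x y z : perp_norm2 x y z = 0 -> Cp x y z = 0.
Proof. intros H. pose proof (Cp_bound x y z) as B. rewrite H in B. nra. Qed.

Lemma partA mu x y z : periodic_solution mu x y z -> 0 < 1 + mu <= 2/3 -> stationary x y z.
Proof.
  intros Hps Hb. pose proof (R1 _ _ _ _ Hps ltac:(lra)) as HR.
  destruct Hps as [Hs [T [HT Hp]]].
  set (a := (1+mu)/2).
  set (Psi := fun t => Lt x y z t * exp (3/4 * Vt x y z t)).
  set (dL := fun t => 2*Lt x y z t*(3/2 - 3*((1+mu)/2) - ((x t+y t+z t)/3 - ((1+mu)/2))) + 2*Cp (x t) (y t) (z t)).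
  set (dV := fun t => Sa ((1+mu)/2) (x t) (y t) (z t) - 3*((1+mu)/2)^2).
  set (dPsi := fun t => exp (3/4 * Vt x y z t) * (dL t + 3/4 * dV t * Lt x y z t)).
  assert (Hd : forall t, is_derive Psi t (dPsi t)).
  { intros t. pose proof (der_L mu x y z Hs t) as h1. pose proof (der_V mu x y z Hs t) as h2.
    unfold Psi. auto_derive.
    - repeat split; eexists; eassumption.
    - fixD. rewrite (is_derive_unique _ _ _ h1), (is_derive_unique _ _ _ h2). unfold dPsi, dL, dV. ring. }
  assert (Hkey : forall t, 0 < Lt x y z t -> 0 < dL t + 3/4 * dV t * Lt x y z t).
  { intros t HL. unfold dL, dV. cbv beta. rewrite (id_S mu (x t) (y t) (z t)).
    pose proof (HR t). unfold Vt in *.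
    pose proof (Cp_bound (x t) (y t) (z t)).
    pose proof (I3 ((1+mu)/2) ((x t+y t+z t)/3 - (1+mu)/2) (Lt x y z t) (Cp (x t) (y t) (z t))
       ltac:(lra) ltac:(lra) HL H0) as HI.
    unfold Lt in *. lra. }
  assert (Hnn : forall t, 0 <= dPsi t).
  { intros t. unfold dPsi. apply Rmult_le_pos. left; apply exp_pos.
    destruct (Rle_lt_or_eq_dec 0 _ (perp_nonneg (x t) (y t) (z t))) as [h|h].
    - left. apply Hkey. exact h.
    - unfold dL, Lt. rewrite <- h, (Cp_zero _ _ _ (eq_sym h)). lra. }
  assert (HpP : per Psi T).
  { intros t. unfold Psi. rewrite (perL x y z T Hp t), (perV x y z T Hp t). auto. }
  pose proof (per_incr_const Psi dPsi T HT HpP Hd Hnn) as Hc.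
  apply (DL mu); [split; [exact Hs| exists T; split; auto] | lra |].
  intros t. apply perp_zero. fold (Lt x y z t).
  destruct (Rle_lt_or_eq_dec 0 _ (perp_nonneg (x t) (y t) (z t))) as [h|h]; [|auto].
  exfalso. pose proof (const_deriv Psi t (dPsi t) Hc (Hd t)) as E.
  unfold dPsi in E. pose proof (exp_pos (3/4 * Vt x y z t)).
  pose proof (Hkey t h). nra.
Qed.

Lemma NoHit mu x y z : periodic_solution mu x y z -> 0 <= 1 + mu ->
  forall t0, Lt x y z t0 = 0 -> forall t, Lt x y z t = 0.
Proof.
  intros Hps Hb t0 H0. pose proof (R1 _ _ _ _ Hps Hb) as HR.
  destruct Hps as [Hs [T [HT Hp]]].
  destruct (per_max (Lt x y z) T HT (perL x y z T Hp) (cont_L mu x y z Hs)) as [tm Hm].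
  set (M := Lt x y z tm).
  assert (HM0 : 0 <= M) by apply perp_nonneg.
  set (K := 3 + 8*((1+mu)/2) + M + 1).
  set (dL := fun t => 2*Lt x y z t*(3/2 - 3*((1+mu)/2) - ((x t+y t+z t)/3 - ((1+mu)/2))) + 2*Cp (x t) (y t) (z t)).
  set (H := fun t => Lt x y z t * exp (K * t)).
  set (dH := fun t => exp (K*t) * (dL t + K * Lt x y z t)).
  assert (Hd : forall t, is_derive H t (dH t)).
  { intros t. pose proof (der_L mu x y z Hs t) as h1.
    unfold H. auto_derive.
    - repeat split; eexists; eassumption.
    - fixD. rewrite (is_derive_unique _ _ _ h1). unfold dH, dL. ring. }
  assert (Hnn : forall t, 0 <= dH t).
  { intros t. unfold dH. apply Rmult_le_pos. left; apply exp_pos.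
    pose proof (HR t) as HRt. pose proof (Hm t) as Hmt. fold M in Hmt.
    pose proof (perp_nonneg (x t) (y t) (z t)) as HLn. fold (Lt x y z t) in HLn.
    pose proof (Cp_bound (x t) (y t) (z t)) as HCb. fold (Lt x y z t) in HCb.
    set (L := Lt x y z t) in *. set (c := Cp (x t) (y t) (z t)) in *.
    unfold Vt in HRt.
    assert (h1 : -(3 + 8*((1+mu)/2))*L <= 2*L*(3/2 - 3*((1+mu)/2) - ((x t+y t+z t)/3 - ((1+mu)/2)))).
    { assert (0 <= L * (6 + 2*((1+mu)/2) - 2*((x t+y t+z t)/3 - ((1+mu)/2)))) by (apply Rmult_le_pos; lra). lra. }
    assert (h2 : -(M+1)*L <= 2*c).
    { assert ((2*c)^2 <= ((M+1)*L)^2).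
      { assert (L^3 <= M*L^2) by (assert (0 <= L^2) by nra; nra). nra. }
      assert (0 <= (M+1)*L) by nra. nra. }
    unfold dL. fold L c. unfold K. lra. }
  intros t. destruct (reduce_before T HT t t0) as [k Hk].
  rewrite <- (per_Z _ T (perL x y z T Hp) k t).
  assert (HHle : H (t + IZR k * T) <= H t0).
  { apply (mono_le H dH); auto. intros s _. eapply derive_cont. apply Hd. }
  unfold H in HHle. rewrite H0 in HHle.
  pose proof (perp_nonneg (x (t + IZR k * T)) (y (t + IZR k * T)) (z (t + IZR k * T))).
  fold (Lt x y z (t + IZR k * T)) in H1.
  pose proof (exp_pos (K * (t + IZR k * T))). nra.
Qed.


Definition tq := Rpower 3 (1/4).

Lemma tq_pos : 0 < tq.
Proof. unfold tq, Rpower. apply exp_pos. Qed.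

Lemma tq_pow n : tq ^ n = Rpower 3 (1/4 * INR n).
Proof. unfold tq. rewrite <- Rpower_pow by (unfold Rpower; apply exp_pos). rewrite Rpower_mult. auto. Qed.

Lemma tq4 : tq^4 = 3.
Proof. rewrite tq_pow. replace (1/4 * INR 4) with 1 by (simpl; field). apply Rpower_1. lra. Qed.

Lemma tq2 : tq^2 = sqrt 3.
Proof. rewrite tq_pow. replace (1/4 * INR 2) with (/2) by (simpl; field). apply Rpower_sqrt. lra. Qed.

Lemma c_eq : c_const = (tq^3 + tq)/2.
Proof. unfold c_const. rewrite tq_pow. replace (1/4 * INR 3) with (3/4) by (simpl; field). fold tq. ring. Qed.

Lemma s3_facts : 1.732 < sqrt 3 < 1.7321 /\ (sqrt 3)^2 = 3.
Proof.
  assert (E : (sqrt 3)^2 = 3) by (rewrite <- Rsqr_pow2; apply Rsqr_sqrt; lra).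
  assert (0 <= sqrt 3) by apply sqrt_pos.
  split; [split|auto]; nra.
Qed.

Definition gfun (b r : R) : R :=
  r - c_const * b * atan (2 * r / (tq * b)) - sqrt 3 / 2 * b + c_const * b * atan tq.

Lemma in_K_eq mu x y z : in_K mu x y z <->
  (V x y z >= gfun (1+mu) (r_mu mu x y z) /\ 0 <= V x y z <= 3*(1+mu)).
Proof. unfold in_K, gfun, tq. tauto. Qed.

Lemma atan_diff u v : 0 <= v <= u -> atan u - atan v <= (u - v)/(1 + u*v).
Proof.
  intros [Hv Hu].
  set (h := fun w => (w - v)/(1 + w*v) - atan w).
  set (h' := fun w => (1 + v^2)/(1+w*v)^2 - /(1 + w^2)).
  assert (Hd : forall w, 0 <= w -> is_derive h w (h' w)).
  { intros w Hw. unfold h, h'. auto_derive. nra. field. split; nra. }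
  assert (Hle : h v <= h u).
  { apply (mono_le h h'); auto.
    - intros t Ht. apply Hd. lra.
    - intros t Ht. eapply derive_cont. apply Hd. lra.
    - intros t Ht. unfold h'. assert (0 < 1 + t*v) by nra. assert (0 < 1 + t^2) by nra.
      assert (E : (1 + v^2)/(1+t*v)^2 - /(1 + t^2) = (t - v)^2/((1+t*v)^2*(1+t^2))) by (field; lra).
      rewrite E. apply Rmult_le_pos. apply pow2_ge_0. left. apply Rinv_0_lt_compat.
      apply Rmult_lt_0_compat; nra. }
  unfold h in Hle. replace ((v - v)/(1 + v*v)) with 0 in Hle by (field; nra). lra.
Qed.

Lemma gfun_t b r : gfun b r = r - (tq^3+tq)/2 * b * atan (2 * r / (tq * b)) - tq^2/2*b + (tq^3+tq)/2 * b * atan tq.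
Proof. unfold gfun. rewrite c_eq, tq2. auto. Qed.

Lemma g_zero b : 0 < b -> gfun b (tq^2*b/2) = 0.
Proof.
  intros Hb. rewrite gfun_t. pose proof tq_pos.
  replace (2 * (tq^2*b/2) / (tq * b)) with tq by (field; lra). field.
Qed.

Lemma frac_id b r : 0 < b -> 0 <= r -> (tq^3+tq)/2 * b * ((tq - 2*r/(tq*b))/(1 + tq*(2*r/(tq*b))))
  = (tq^2+1)*b*(tq^2*b - 2*r)/(2*(b+2*r)).
Proof. intros Hb Hr. pose proof tq_pos. field. repeat split; nra. Qed.

Lemma g_le b r : 0 < b -> 0 <= r <= tq^2*b/2 -> gfun b r <= 3*b/2 - tq^2*r.
Proof.
  intros Hb [Hr1 Hr2]. rewrite gfun_t. pose proof tq_pos as Ht. pose proof tq4 as H4.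
  set (y := 2*r/(tq*b)).
  assert (Hy : 0 <= y <= tq).
  { unfold y. split. apply Rmult_le_pos; [lra|]. left; apply Rinv_0_lt_compat; nra.
    apply (Rmult_le_reg_r (tq*b)); [nra|]. field_simplify; [|lra]. nra. }
  pose proof (atan_diff tq y ltac:(lra)) as HA.
  assert (HA2 : (tq^3+tq)/2 * b * (atan tq - atan y) <= (tq^3+tq)/2 * b * ((tq - y)/(1 + tq*y))).
  { apply Rmult_le_compat_l; [|auto]. apply Rmult_le_pos; [|lra]. nra. }
  unfold y in HA2. rewrite frac_id in HA2 by lra. fold y in HA2.
  assert (Hf : (tq^2+1)*b*(tq^2*b - 2*r)/(2*(b+2*r)) <= (tq^2+1)*(tq^2*b - 2*r)/2).
  { apply (Rmult_le_reg_r (2*(b+2*r))); [nra|].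
    field_simplify; [|nra].
    assert (0 <= (tq^2+1)*(tq^2*b - 2*r)) by (apply Rmult_le_pos; nra).
    nra. }
  assert (E : r - tq^2/2*b + (tq^2+1)*(tq^2*b - 2*r)/2 = 3*b/2 - tq^2*r + (tq^4 - 3)*b/2) by field.
  rewrite H4 in E. lra.
Qed.

Lemma g_ge b r : 0 < b -> tq^2*b/2 <= r ->
  r - tq^2/2*b - (tq^2+1)*b*(2*r - tq^2*b)/(2*(b+2*r)) <= gfun b r.
Proof.
  intros Hb Hr. rewrite gfun_t. pose proof tq_pos as Ht.
  set (y := 2*r/(tq*b)).
  assert (Hy : tq <= y).
  { unfold y. apply (Rmult_le_reg_r (tq*b)); [nra|]. field_simplify; [|lra]. nra. }
  pose proof (atan_diff y tq ltac:(lra)) as HA.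
  assert (HA2 : (tq^3+tq)/2 * b * (atan y - atan tq) <= (tq^3+tq)/2 * b * ((y - tq)/(1 + y*tq))).
  { apply Rmult_le_compat_l; [|auto]. apply Rmult_le_pos; [|lra]. nra. }
  assert (E : (tq^3+tq)/2 * b * ((y - tq)/(1 + y*tq)) = (tq^2+1)*b*(2*r - tq^2*b)/(2*(b+2*r))).
  { unfold y. field. repeat split; nra. }
  lra.
Qed.

Lemma g_poly b r W : 0 < b -> tq^2*b/2 <= r -> W >= gfun b r ->
  4*r^2 - 4*r*(tq^2*b + W) + 3*b^2 - 2*W*b <= 0.
Proof.
  intros Hb Hr HW. pose proof (g_ge b r Hb Hr) as Hg. pose proof tq_pos as Ht. pose proof tq4 as H4.
  assert (HW2 : r - tq^2/2*b - (tq^2+1)*b*(2*r - tq^2*b)/(2*(b+2*r)) <= W) by lra.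
  assert (0 < b + 2*r) by nra.
  apply (Rmult_le_compat_r (2*(b+2*r))) in HW2; [|lra].
  assert (E : (r - tq^2/2*b - (tq^2+1)*b*(2*r - tq^2*b)/(2*(b+2*r)))*(2*(b+2*r))
     = 2*r*(b+2*r) - tq^2*b*(b+2*r) - (tq^2+1)*b*(2*r - tq^2*b)) by (field; lra).
  rewrite E in HW2.
  assert (E2 : 4*r^2 - 4*r*(tq^2*b + W) + 3*b^2 - 2*W*b
     = (2*r*(b+2*r) - tq^2*b*(b+2*r) - (tq^2+1)*b*(2*r - tq^2*b)) - W*(2*(b+2*r)) + (3 - tq^4)*b^2) by ring.
  rewrite E2, H4. lra.
Qed.

Lemma g_der b r : 0 < b -> is_derive (gfun b) r (1 - (tq^2+1)*tq^2*b^2/(tq^2*b^2 + 4*r^2)).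
Proof.
  intros Hb. pose proof tq_pos as Ht.
  apply (is_derive_ext (fun r => r - (tq^3+tq)/2 * b * atan (2 * r / (tq * b)) - tq^2/2*b + (tq^3+tq)/2 * b * atan tq)).
  { intros s. rewrite gfun_t. auto. }
  auto_derive. auto. field. split; [|split; lra]. assert (0 < (tq*b)^2) by (apply pow_lt; nra). assert (0 <= r^2) by apply pow2_ge_0. lra.
Qed.


Lemma cont_neg (F : R -> R) m : continuity_pt F m -> F m < 0 ->
  exists d, 0 < d /\ forall s, Rabs (s - m) < d -> F s < 0.
Proof.
  intros Hc Hm. destruct (Hc (- F m) ltac:(lra)) as [d [Hd H]].
  exists d. split; auto. intros s Hs.
  destruct (Req_dec s m) as [->|Hne]; auto.
  assert (h := H s (conj (conj I (not_eq_sym Hne)) Hs)).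
  simpl in h. unfold R_dist in h. apply Rabs_def2 in h. lra.
Qed.

Lemma r_mu_eq mu x y z : r_mu mu x y z = sqrt (Sa ((1+mu)/2) x y z).
Proof. unfold r_mu, Sa. reflexivity. Qed.

Lemma sqrt_sq_le S u : 0 <= S -> 0 <= u -> S <= u^2 -> sqrt S <= u.
Proof. intros HS Hu H. pose proof (sqrt_pos S). pose proof (sqrt_sqrt S HS). nra. Qed.

Lemma sqrt_sq_gt S u : 0 <= S -> 0 <= u -> u^2 < S -> u < sqrt S.
Proof. intros HS Hu H. pose proof (sqrt_pos S). pose proof (sqrt_sqrt S HS). nra. Qed.

Lemma Sa_nonneg a x y z : 0 <= Sa a x y z.
Proof. unfold Sa. assert (0 <= (x-a)^2) by apply pow2_ge_0. assert (0 <= (y-a)^2) by apply pow2_ge_0. assert (0 <= (z-a)^2) by apply pow2_ge_0. lra. Qed.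

Lemma B1 mu x y z : 0 < 1 + mu -> 0 <= V x y z ->
  Sa ((1+mu)/2) x y z <= 3*((1+mu)/2)^2 -> V x y z >= gfun (1+mu) (r_mu mu x y z).
Proof.
  intros Hb HV HS. rewrite r_mu_eq. set (S := Sa ((1+mu)/2) x y z) in *.
  set (r := sqrt S). pose proof (sqrt_pos S) as Hr. fold r in Hr.
  pose proof tq2 as Ht2. pose proof s3_facts as [Hs Hs2]. pose proof tq4 as Ht4.
  assert (HSn : 0 <= S) by apply Sa_nonneg.
  assert (Hrr : r^2 = S) by (unfold r; rewrite <- Rsqr_pow2; apply Rsqr_sqrt; auto).
  assert (Hrle : r <= tq^2*(1+mu)/2).
  { unfold r. apply sqrt_sq_le; auto. rewrite Ht2. nra. rewrite Ht2. nra. }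
  pose proof (g_le (1+mu) r Hb (conj Hr Hrle)) as Hg.
  assert (Hid := id_S mu x y z). fold S in Hid.
  pose proof (perp_nonneg x y z).
  assert (HV2 : 3*(1+mu)/2 - tq^2*r <= V x y z).
  { unfold V. set (n := (x+y+z)/3 - (1+mu)/2) in *.
    assert (3*n^2 <= r^2) by lra.
    rewrite Ht2. assert (9*n^2 <= (sqrt 3 * r)^2) by nra.
    assert (0 <= sqrt 3 * r) by nra.
    assert (-3*n <= sqrt 3 * r) by nra. unfold n in *. lra. }
  lra.
Qed.

Section BB.
Variables (mu : R) (x y z : R -> R).
Hypothesis Hs : is_solution mu x y z.

Definition St t := Sa ((1+mu)/2) (x t) (y t) (z t).
Definition rt t := sqrt (St t).
Definition Ft t := Vt x y z t - gfun (1+mu) (rt t).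
Definition nt t := (x t + y t + z t)/3 - (1+mu)/2.
Definition Pt t := 3*(nt t)^3 + Cp (x t) (y t) (z t) - 3/2*mu*Lt x y z t - 3*((1+mu)/2)^2*(nt t).
Definition dF t := (St t - 3*((1+mu)/2)^2)
   - (1 - (tq^2+1)*tq^2*(1+mu)^2/(tq^2*(1+mu)^2 + 4*(rt t)^2)) * (2*Pt t / (2 * rt t)).

Lemma der_F t : 0 < 1 + mu -> 0 < St t -> is_derive Ft t (dF t).
Proof.
  intros Hb HS.
  assert (h1 : is_derive St t (2*Pt t)).
  { unfold St, Pt, nt. apply der_S. auto. }
  assert (h2 : is_derive rt t (2*Pt t / (2 * rt t))).
  { unfold rt. assert (hs : is_derive sqrt (St t) (/ (2 * sqrt (St t)))).
    { apply is_derive_Reals. apply derivable_pt_lim_sqrt. auto. }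
    pose proof (is_derive_comp sqrt St t _ _ hs h1) as hc.
    eapply is_derive_ext; [| exact hc]. intros s; auto.
  }
  pose proof (g_der (1+mu) (rt t) Hb) as h3.
  pose proof (is_derive_comp (gfun (1+mu)) rt t _ _ h3 h2) as h4.
  pose proof (der_V mu x y z Hs t) as h5.
  pose proof (is_derive_minus _ _ t _ _ h5 h4) as h6.
  unfold Ft. eapply is_derive_ext; [intros s; reflexivity|].
  replace (dF t) with (minus (Sa ((1+mu)/2) (x t) (y t) (z t) - 3*((1+mu)/2)^2)
     (scal (2*Pt t / (2 * rt t)) (1 - (tq^2+1)*tq^2*(1+mu)^2/(tq^2*(1+mu)^2 + 4*(rt t)^2)))).
  exact h6.
  unfold dF, St, minus, scal, plus, opp; simpl. unfold mult; simpl. ring.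
Qed.

Lemma dF_nonneg t : 2/3 <= 1 + mu <= 1.55 -> 0 <= Vt x y z t <= 3*(1+mu) ->
  3*((1+mu)/2)^2 < St t -> 0 <= dF t.
Proof.
  intros Hb HV HS.
  pose proof tq2 as Ht2. pose proof s3_facts as [Hs3 Hs32]. pose proof tq4 as Ht4.
  remember (1+mu) as b eqn:Hbdef. set (a := b/2).
  assert (HSn : 0 <= St t) by (unfold St; apply Sa_nonneg).
  set (r := rt t).
  assert (Hrr : r^2 = St t) by (unfold r, rt; rewrite <- Rsqr_pow2; apply Rsqr_sqrt; auto).
  assert (Hr0 : 0 <= r) by (unfold r, rt; apply sqrt_pos).
  assert (Hr : 0 < r) by nra.
  assert (Hid := id_S mu (x t) (y t) (z t)). fold (St t) in Hid. fold (nt t) in Hid.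
  fold (Lt x y z t) in Hid.
  pose proof (perp_nonneg (x t) (y t) (z t)) as HL. fold (Lt x y z t) in HL.
  pose proof (Cp_bound (x t) (y t) (z t)) as HC. fold (Lt x y z t) in HC.
  assert (Hn : -a <= nt t <= a) by (unfold nt, a; unfold Vt in HV; rewrite <- Hbdef; lra).
  pose proof (I2full a (nt t) (Lt x y z t) (Cp (x t) (y t) (z t)) r (sqrt 3) ltac:(lra) Hs32
     ltac:(unfold a; lra) Hn HL HC Hr0 ltac:(lra) ltac:(unfold a; lra)) as HP.
  assert (HP2 : Pt t <= r^3 + sqrt 3 * a^2 * r).
  { unfold Pt. replace mu with (2*a - 1) by (unfold a; rewrite Hbdef; field). lra. }
  unfold dF. fold r. rewrite <- Hbdef. rewrite Ht2.
  set (s := sqrt 3) in *.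
  assert (Hden : 0 < s*b^2 + 4*r^2) by nra.
  assert (Eg : 1 - (s+1)*s*b^2/(s*b^2 + 4*r^2) = (4*r^2 - 3*b^2)/(s*b^2 + 4*r^2)).
  { assert (Ess : (s+1)*s*b^2 = (s+3)*b^2) by (replace ((s+1)*s*b^2) with ((s^2 + s)*b^2) by ring; rewrite Hs32; ring).
    rewrite Ess. field. lra. }
  replace ((s+1)*s*b^2) with ((s+1)*s*b^2) by auto.
  rewrite Eg.
  assert (Hg0 : 0 <= 4*r^2 - 3*b^2) by (unfold a in *; nra).
  assert (HPr : 2*Pt t / (2*r) <= r^2 + s*a^2) by (apply (Rmult_le_reg_r (2*r)); [lra|]; field_simplify; nra).
  assert (Hgp : 0 <= (4*r^2 - 3*b^2)/(s*b^2 + 4*r^2)) by (apply Rmult_le_pos; [lra| left; apply Rinv_0_lt_compat; lra]).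
  assert (H1 : (4*r^2 - 3*b^2)/(s*b^2 + 4*r^2) * (2*Pt t / (2*r)) <= (4*r^2 - 3*b^2)/(s*b^2 + 4*r^2) * (r^2 + s*a^2))
    by (apply Rmult_le_compat_l; auto).
  assert (E2 : (4*r^2 - 3*b^2)/(s*b^2 + 4*r^2) * (r^2 + s*a^2) = r^2 - 3*a^2) by (unfold a; field; lra).
  unfold a in *. lra.
Qed.
End BB.

Lemma cont_F mu x y z : is_solution mu x y z -> 0 < 1 + mu -> forall t, continuity_pt (Ft mu x y z) t.
Proof.
  intros Hs Hb t.
  assert (h1 : continuity_pt (St mu x y z) t).
  { eapply derive_cont. unfold St. apply der_S. auto. }
  assert (h2 : continuity_pt (rt mu x y z) t).
  { unfold rt. change (continuity_pt (comp sqrt (St mu x y z)) t).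
    apply continuity_pt_comp; auto. apply continuity_pt_sqrt. unfold St; apply Sa_nonneg. }
  assert (h3 : continuity_pt (comp (gfun (1+mu)) (rt mu x y z)) t).
  { apply continuity_pt_comp; auto. eapply derive_cont. apply g_der. auto. }
  change (continuity_pt (minus_fct (Vt x y z) (comp (gfun (1+mu)) (rt mu x y z))) t).
  apply continuity_pt_minus; auto. apply (cont_V mu); auto.
Qed.

Lemma Ft_eq mu x y z s : Ft mu x y z s = V (x s) (y s) (z s) - gfun (1+mu) (r_mu mu (x s) (y s) (z s)).
Proof. unfold Ft, rt, St, Vt, V. rewrite r_mu_eq. auto. Qed.

Lemma B4 mu x y z : periodic_solution mu x y z -> 2/3 <= 1 + mu <= 1.55 ->
  forall t, 0 <= Ft mu x y z t.
Proof.
  intros Hps Hb. pose proof (R1 _ _ _ _ Hps ltac:(lra)) as HR.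
  destruct Hps as [Hs [T [HT Hp]]].
  assert (Hin : forall s, St mu x y z s <= 3*((1+mu)/2)^2 -> 0 <= Ft mu x y z s).
  { intros s Hss. rewrite Ft_eq. pose proof (HR s) as h. unfold Vt in h.
    pose proof (B1 mu (x s) (y s) (z s) ltac:(lra) ltac:(unfold V; lra) Hss). lra. }
  destruct (per_max (Vt x y z) T HT (perV x y z T Hp) (cont_V mu x y z Hs)) as [t0 H0].
  pose proof (crit_max _ _ _ (der_V mu x y z Hs t0) H0) as E0.
  assert (HpS : per (St mu x y z) T) by (apply (per_comp (Sa ((1+mu)/2)) x y z T Hp)).
  intros t. destruct (Rle_dec 0 (Ft mu x y z t)) as [ok|Hneg]; auto. apply Rnot_le_lt in Hneg. exfalso.
  destruct (reduce_before T HT t0 t) as [k Hk].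
  set (t1 := t0 + IZR k * T) in *.
  assert (HF1 : 0 <= Ft mu x y z t1).
  { apply Hin. unfold t1. rewrite (per_Z _ T HpS k t0). unfold St. lra. }
  set (Eset := fun s => t1 <= s <= t /\ 0 <= Ft mu x y z s).
  assert (Hbd : bound Eset) by (exists t; intros s [Hs1 _]; lra).
  destruct (completeness Eset Hbd (ex_intro _ t1 (conj (conj (Rle_refl _) Hk) HF1))) as [m [Hub Hlub]].
  assert (Hm1 : t1 <= m) by (apply Hub; split; [lra|auto]).
  assert (Hm2 : m <= t) by (apply Hlub; intros s [Hs1 _]; lra).
  assert (HFm : 0 <= Ft mu x y z m).
  { destruct (Rle_dec 0 (Ft mu x y z m)) as [ok|h]; auto. apply Rnot_le_lt in h. exfalso.
    destruct (cont_neg _ m (cont_F mu x y z Hs ltac:(lra) m) h) as [d [Hd Hd2]].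
    assert (Hnub : ~ is_upper_bound Eset (m - d/2)) by (intros Hc; specialize (Hlub _ Hc); lra).
    apply Hnub. intros s [Hs1 Hs2].
    destruct (Rle_dec s (m - d/2)) as [ok|h2]; auto. apply Rnot_le_lt in h2.
    assert (s <= m) by (apply Hub; split; auto).
    assert (Ft mu x y z s < 0) by (apply Hd2; apply Rabs_def1; lra). lra. }
  assert (Hmt : m < t) by (destruct (Req_dec m t) as [->|]; lra).
  assert (Hafter : forall s, m < s <= t -> Ft mu x y z s < 0).
  { intros s Hs'. destruct (Rle_dec 0 (Ft mu x y z s)) as [h|h]; [|lra].
    assert (s <= m) by (apply Hub; split; [lra|auto]). lra. }
  assert (Hout : forall s, m < s <= t -> 3*((1+mu)/2)^2 < St mu x y z s).
  { intros s Hs'. destruct (Rlt_le_dec (3*((1+mu)/2)^2) (St mu x y z s)) as [h|h]; auto.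
    specialize (Hin s h). specialize (Hafter s Hs'). lra. }
  assert (Hle : Ft mu x y z m <= Ft mu x y z t).
  { apply (mono_le _ (dF mu x y z)); [lra| | |].
    - intros s Hs'. apply der_F; auto. lra. assert (0 <= 3*((1+mu)/2)^2) by nra. specialize (Hout s ltac:(lra)). lra.
    - intros s _. apply cont_F; auto. lra.
    - intros s Hs'. apply dF_nonneg; auto. apply Hout. lra. }
  lra.
Qed.


Lemma zero_deriv_const (h : R -> R) : (forall t, is_derive h t 0) -> forall a b, h a = h b.
Proof.
  intros Hd.
  assert (Hm : forall a b, a <= b -> h a <= h b).
  { intros a b Hab. apply (mono_le h (fun _ => 0)); [exact Hab| intros; apply Hd | | intros; lra].
    intros s _. eapply derive_cont; apply Hd. }
  assert (Hd2 : forall t, is_derive (fun s => - h s) t 0).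
  { intros t. replace 0 with (- 0) by lra. apply (is_derive_opp h). auto. }
  assert (Hm2 : forall a b, a <= b -> - h a <= - h b).
  { intros a b Hab. apply (mono_le (fun s => - h s) (fun _ => 0)); [exact Hab| intros; apply Hd2 | | intros; lra].
    intros s _. eapply derive_cont; apply Hd2. }
  intros a b. destruct (Rle_dec a b).
  - specialize (Hm a b r). specialize (Hm2 a b r). lra.
  - specialize (Hm b a ltac:(lra)). specialize (Hm2 b a ltac:(lra)). lra.
Qed.

Section Lift.
Variables (p1 p2 dp1 dp2 Th : R -> R) (T : R).
Hypothesis H1 : forall t, is_derive p1 t (dp1 t).
Hypothesis H2 : forall t, is_derive p2 t (dp2 t).
Hypothesis HN : forall t, 0 < p1 t ^ 2 + p2 t ^ 2.
Hypothesis HTh : forall t, is_derive Th t ((p1 t * dp2 t - p2 t * dp1 t)/(p1 t ^ 2 + p2 t ^ 2)).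
Hypothesis HTh0 : Th 0 = 0.
Hypothesis HT : 0 < T.
Hypothesis Hp1 : p1 T = p1 0.
Hypothesis Hp2 : p2 T = p2 0.

Let al := p1 0.
Let be := p2 0.
Definition q1 t := p1 t * cos (Th t) + p2 t * sin (Th t).
Definition q2 t := - p1 t * sin (Th t) + p2 t * cos (Th t).
Definition Sf t := al * q2 t - be * q1 t.
Definition Rf t := al * q1 t + be * q2 t.

Lemma der_S2 t : is_derive (fun t => Sf t ^ 2 / (p1 t ^ 2 + p2 t ^ 2)) t 0.
Proof.
  pose proof (H1 t) as h1. pose proof (H2 t) as h2. pose proof (HTh t) as h3. pose proof (HN t).
  unfold Sf, q1, q2. auto_derive.
  - repeat split; try (eexists; eassumption). lra.
  - fixD. rewrite (is_derive_unique _ _ _ h1), (is_derive_unique _ _ _ h2), (is_derive_unique _ _ _ h3).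
    field. lra.
Qed.

Lemma der_R2 t : is_derive (fun t => Rf t ^ 2 / (p1 t ^ 2 + p2 t ^ 2)) t 0.
Proof.
  pose proof (H1 t) as h1. pose proof (H2 t) as h2. pose proof (HTh t) as h3. pose proof (HN t).
  unfold Rf, q1, q2. auto_derive.
  - repeat split; try (eexists; eassumption). lra.
  - fixD. rewrite (is_derive_unique _ _ _ h1), (is_derive_unique _ _ _ h2), (is_derive_unique _ _ _ h3).
    field. lra.
Qed.


Lemma lift_core : sin (Th T) = 0 /\ 0 < cos (Th T).
Proof.
  pose proof (HN 0) as HN0. fold al be in HN0.
  assert (HS0 : Sf 0 = 0) by (unfold Sf, q1, q2; rewrite HTh0, sin_0, cos_0; fold al be; ring).
  assert (HR0 : Rf 0 = al^2 + be^2) by (unfold Rf, q1, q2; rewrite HTh0, sin_0, cos_0; fold al be; ring).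
  pose proof (zero_deriv_const _ der_S2) as CS.
  pose proof (zero_deriv_const _ der_R2) as CR.
  assert (HST : Sf T = - (al^2+be^2) * sin (Th T)) by (unfold Sf, q1, q2; rewrite Hp1, Hp2; fold al be; ring).
  assert (HRT : Rf T = (al^2+be^2) * cos (Th T)) by (unfold Rf, q1, q2; rewrite Hp1, Hp2; fold al be; ring).
  assert (Hsin : sin (Th T) = 0).
  { specialize (CS T 0). cbv beta in CS. rewrite HS0, Hp1, Hp2 in CS. fold al be in CS.
    assert (E : Sf T ^ 2 = 0).
    { assert (E1 : Sf T ^ 2 = (Sf T ^ 2 / (al ^ 2 + be ^ 2)) * (al^2+be^2)) by (field; lra).
      rewrite E1, CS. field. lra. }
    assert (Sf T = 0) by nra. rewrite HST in H. nra. }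
  split; auto.
  assert (HRne : forall t, Rf t <> 0).
  { intros t Hc. specialize (CR t 0). cbv beta in CR. rewrite Hc, HR0 in CR. fold al be in CR.
    pose proof (HN t).
    assert (E : (al^2+be^2)^2/(al^2+be^2) = al^2+be^2) by (field; lra).
    rewrite E in CR. assert (0 ^ 2 / (p1 t ^ 2 + p2 t ^ 2) = 0) by (field; lra). lra. }
  assert (Hcont : continuity (fun t => - Rf t)).
  { intros t. assert (hd : ex_derive (fun t => - Rf t) t).
    { pose proof (H1 t) as h1. pose proof (H2 t) as h2. pose proof (HTh t) as h3.
      unfold Rf, q1, q2. auto_derive. repeat split; eexists; eassumption. }
    destruct hd as [l hl]. eapply derive_cont; eauto. }
  destruct (Rle_dec (Rf T) 0) as [h|h].
  - exfalso. assert (Rf T < 0) by (specialize (HRne T); lra).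
    destruct (IVT (fun t => - Rf t) 0 T Hcont HT ltac:(lra) ltac:(lra)) as [c [_ Hc]].
    apply (HRne c). lra.
  - rewrite HRT in h. apply Rnot_le_lt in h. nra.
Qed.
End Lift.

Lemma wind_int (p1 p2 dp1 dp2 om : R -> R) T : 0 < T ->
  (forall t, is_derive p1 t (dp1 t)) -> (forall t, is_derive p2 t (dp2 t)) ->
  (forall t, continuity_pt om t) ->
  (forall t, 0 < p1 t ^ 2 + p2 t ^ 2) ->
  (forall t, om t = (p1 t * dp2 t - p2 t * dp1 t)/(p1 t ^ 2 + p2 t ^ 2)) ->
  p1 T = p1 0 -> p2 T = p2 0 -> (forall t, om t < 0) ->
  RInt om 0 T <= -2*PI.
Proof.
  intros HT H1 H2 Hc HN Hom Hp1 Hp2 Hneg.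
  set (Th := fun t => RInt om 0 t).
  assert (Hcc : forall t, continuous om t) by (intros t; apply continuity_pt_filterlim; auto).
  assert (HdTh : forall t, is_derive Th t (om t)).
  { intros t. apply (is_derive_RInt om Th 0 t).
    - apply filter_forall. intros b. apply (RInt_correct (V:=R_CompleteNormedModule)). apply (ex_RInt_continuous (V:=R_CompleteNormedModule)). intros; auto.
    - auto. }
  assert (HTh0 : Th 0 = 0) by (unfold Th; rewrite RInt_point; auto).
  assert (HTh : forall t, is_derive Th t ((p1 t * dp2 t - p2 t * dp1 t)/(p1 t ^ 2 + p2 t ^ 2))).
  { intros t. rewrite <- Hom. auto. }
  destruct (lift_core p1 p2 dp1 dp2 Th T H1 H2 HN HTh HTh0 HT Hp1 Hp2) as [Hs Hcos].
  assert (Hlt : Th T < Th 0).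
  { apply (mono_lt Th om 0 T HT (fun t _ => HdTh t) (fun t _ => derive_cont _ _ _ (HdTh t)) (fun t _ => Hneg t)). }
  rewrite HTh0 in Hlt. fold (Th T).
  destruct (sin_eq_0_0 _ Hs) as [k Hk]. rewrite Hk in *.
  pose proof PI_RGT_0.
  assert (Hk1 : IZR k < 0) by nra.
  apply lt_IZR in Hk1.
  destruct (Z.eq_dec k (-1)) as [->|Hne].
  - exfalso. replace (IZR (-1) * PI) with (- PI) in Hcos by (simpl; ring).
    rewrite cos_neg, cos_PI in Hcos. lra.
  - assert (Hk2 : (k <= -2)%Z) by lia. apply IZR_le in Hk2. nra.
Qed.


Lemma part1 mu x y z : -1 < mu <= 55/100 -> periodic_solution mu x y z -> forall t, in_K mu (x t) (y t) (z t).
Proof.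
  intros Hmu Hps t. pose proof (R1 _ _ _ _ Hps ltac:(lra)) as HR.
  apply in_K_eq. split; [|pose proof (HR t); unfold Vt, V in *; lra].
  destruct (Rle_dec (1+mu) (2/3)) as [Hb|Hb].
  - pose proof (partA _ _ _ _ Hps ltac:(lra)) as Hst.
    destruct Hps as [Hs _].
    assert (HV : forall s, Vt x y z s = Vt x y z 0).
    { intros s. destruct (Hst s) as [e1 [e2 e3]]. unfold Vt. rewrite e1, e2, e3. auto. }
    pose proof (const_deriv _ _ _ HV (der_V mu x y z Hs t)) as E.
    apply B1. lra. pose proof (HR t); unfold Vt, V in *; lra. lra.
  - pose proof (B4 _ _ _ _ Hps ltac:(lra) t) as HF. rewrite Ft_eq in HF. lra.
Qed.

Lemma Lpos mu x y z : -1 < mu <= 55/100 -> periodic_solution mu x y z -> ~ stationary x y z ->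
  2/3 < 1 + mu /\ forall t, 0 < Lt x y z t.
Proof.
  intros Hmu Hps Hns. 
  assert (Hb : 2/3 < 1 + mu).
  { destruct (Rle_dec (1+mu) (2/3)); [|lra]. exfalso. apply Hns. apply (partA mu); auto. lra. }
  split; auto. intros t.
  destruct (Rle_lt_or_eq_dec 0 _ (perp_nonneg (x t) (y t) (z t))) as [h|h]; auto.
  exfalso. apply Hns. apply (DL mu); auto. lra.
  intros s. apply perp_zero. apply (NoHit mu x y z Hps ltac:(lra) t). unfold Lt. auto.
Qed.

Lemma part2 mu x y z : -1 < mu <= 55/100 -> periodic_solution mu x y z -> ~ stationary x y z ->
  forall t, in_K mu (x t) (y t) (z t) /\ ~ in_Delta (x t) (y t) (z t).
Proof.
  intros Hmu Hps Hns t. split. apply part1; auto.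
  destruct (Lpos mu x y z Hmu Hps Hns) as [_ HL].
  intros [e1 e2]. specialize (HL t). unfold Lt, perp_norm2 in HL. rewrite e1, e2 in HL. nra.
Qed.

Lemma N_neg mu x y z : 0 < 1 + mu <= 1.55 -> in_K mu x y z -> 0 < perp_norm2 x y z ->
  (z-y)*sprott_fx mu x y z + (x-z)*sprott_fy mu x y z + (y-x)*sprott_fz mu x y z < 0.
Proof.
  intros Hb HK HL. apply in_K_eq in HK. destruct HK as [HK HV].
  rewrite id_N.
  pose proof tq2 as Ht2. pose proof s3_facts as [Hs3 Hs32].
  set (r := r_mu mu x y z) in *.
  assert (Hr0 : 0 <= r) by (unfold r; rewrite r_mu_eq; apply sqrt_pos).
  assert (Hrr : r^2 = Sa ((1+mu)/2) x y z) by (unfold r; rewrite r_mu_eq; rewrite <- Rsqr_pow2; apply Rsqr_sqrt; apply Sa_nonneg).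
  pose proof (id_S mu x y z) as Hid.
  assert (Hor : r <= sqrt 3 * (1+mu)/2 \/ 4*r^2 - 4*r*(sqrt 3*(1+mu) + V x y z) + 3*(1+mu)^2 - 2*V x y z*(1+mu) <= 0).
  { destruct (Rle_dec r (tq^2*(1+mu)/2)) as [h|h].
    - left. rewrite <- Ht2. auto.
    - right. rewrite <- Ht2. apply g_poly. lra. lra. auto. }
  pose proof (I4 r (V x y z) (1+mu) (sqrt 3) Hs3 Hs32 Hb HV Hr0 Hor) as HI.
  assert (EL : perp_norm2 x y z = r^2 - (V x y z - 3*(1+mu)/2)^2/3) by (unfold V in *; lra).
  rewrite <- EL in HI.
  pose proof (Cw_bound x y z) as HC.
  set (L := perp_norm2 x y z) in *. set (c := Cw x y z) in *.
  assert (HVv : 0 <= (x+y+z)) by (unfold V in HV; lra).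
  destruct (Rle_dec c 0) as [h|h].
  - assert (0 < L * (1 + 2*(x+y+z)/3)) by (apply Rmult_lt_0_compat; lra). lra.
  - apply Rnot_le_lt in h.
    assert (c^2 < (L*(3/2 + V x y z))^2).
    { assert (L^3/2 < L^2*(3/2+V x y z)^2) by (assert (0 < L^2) by nra; nra). nra. }
    assert (0 < L*(3/2 + V x y z)) by (apply Rmult_lt_0_compat; unfold V in *; lra).
    assert (c < L*(3/2 + V x y z)) by nra.
    unfold V in *. lra.
Qed.

Lemma part3 mu x y z T : -1 < mu <= 55/100 -> is_solution mu x y z -> ~ stationary x y z ->
  minimal_period x y z T ->
  exists pr : Riemann_integrable (dtheta_along mu x y z) 0 T, RiemannInt pr / (2 * PI) <= -1.
Proof.
  intros Hmu Hs Hns [HT [Hp _]].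
  assert (Hps : periodic_solution mu x y z) by exact (conj Hs (ex_intro _ T (conj HT Hp))).
  destruct (Lpos mu x y z Hmu Hps Hns) as [Hb HL].
  pose proof (part1 mu x y z Hmu Hps) as HK.
  pose proof s3_facts as [Hs3 Hs32].
  set (s := sqrt 3) in *.
  set (om := dtheta_along mu x y z).
  set (p1 := fun t => s * (x t - y t)). set (p2 := fun t => x t + y t - 2 * z t).
  set (fx := fun t => sprott_fx mu (x t) (y t) (z t)).
  set (fy := fun t => sprott_fy mu (x t) (y t) (z t)).
  set (fz := fun t => sprott_fz mu (x t) (y t) (z t)).
  set (dp1 := fun t => s * (fx t - fy t)). set (dp2 := fun t => fx t + fy t - 2 * fz t).
  assert (Hd1 : forall t, is_derive p1 t (dp1 t)).
  { intros t. destruct (sol_der _ _ _ _ Hs t) as [h1 [h2 h3]]. unfold p1, dp1.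
    auto_derive. repeat split; eexists; eassumption. fixD.
    rewrite (is_derive_unique _ _ _ h1), (is_derive_unique _ _ _ h2). unfold fx, fy. ring. }
  assert (Hd2 : forall t, is_derive p2 t (dp2 t)).
  { intros t. destruct (sol_der _ _ _ _ Hs t) as [h1 [h2 h3]]. unfold p2, dp2.
    auto_derive. repeat split; eexists; eassumption. fixD.
    rewrite (is_derive_unique _ _ _ h1), (is_derive_unique _ _ _ h2), (is_derive_unique _ _ _ h3). unfold fx, fy, fz. ring. }
  assert (HN : forall t, p1 t ^ 2 + p2 t ^ 2 = 6 * Lt x y z t).
  { intros t. unfold p1, p2, Lt, perp_norm2. replace ((s * (x t - y t))^2) with (s^2 * (x t - y t)^2) by ring.
    rewrite Hs32. field. }
  assert (HNp : forall t, 0 < p1 t ^ 2 + p2 t ^ 2) by (intros t; rewrite HN; specialize (HL t); lra).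
  assert (Hom : forall t, om t = (p1 t * dp2 t - p2 t * dp1 t)/(p1 t ^ 2 + p2 t ^ 2)).
  { intros t. rewrite HN. specialize (HL t). unfold Lt in HL.
    unfold om, dtheta_along, dtheta, p1, p2, dp1, dp2, fx, fy, fz. fold s.
    assert (0 < s) by lra.
    set (N := (z t - y t) * sprott_fx mu (x t) (y t) (z t) + (x t - z t) * sprott_fy mu (x t) (y t) (z t) +
      (y t - x t) * sprott_fz mu (x t) (y t) (z t)).
    set (L := perp_norm2 (x t) (y t) (z t)) in *.
    assert (EN : s * (x t - y t) * (sprott_fx mu (x t) (y t) (z t) + sprott_fy mu (x t) (y t) (z t) - 2 * sprott_fz mu (x t) (y t) (z t)) -
      (x t + y t - 2 * z t) * (s * (sprott_fx mu (x t) (y t) (z t) - sprott_fy mu (x t) (y t) (z t))) = 2*s*N) by (unfold N; ring).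
    rewrite EN.
    assert (E : 2*s*N/(6*L) = (s^2/3) * (/s*(N/L))) by (field; lra).
    unfold Lt; fold L. rewrite E, Hs32. field. lra. }
  assert (Hc : forall t, continuity_pt om t).
  { intros t. specialize (HL t). unfold Lt in HL.
    assert (hd : ex_derive om t).
    { destruct (sol_der _ _ _ _ Hs t) as [h1 [h2 h3]].
      unfold om, dtheta_along, dtheta, perp_norm2, sprott_fx, sprott_fy, sprott_fz in *. fold s.
      auto_derive. repeat split; try (eexists; eassumption); lra. }
    destruct hd as [l hl]. eapply derive_cont; eauto. }
  assert (Hneg : forall t, om t < 0).
  { intros t. unfold om, dtheta_along, dtheta. fold s.
    pose proof (N_neg mu (x t) (y t) (z t) ltac:(lra) (HK t) (HL t)) as h.
    specialize (HL t). unfold Lt in HL.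
    assert (0 < / s) by (apply Rinv_0_lt_compat; lra).
    assert (0 < / perp_norm2 (x t) (y t) (z t)) by (apply Rinv_0_lt_compat; lra).
    unfold Rdiv. rewrite <- (Rmult_0_r (/ s)). apply Rmult_lt_compat_l; auto. rewrite <- (Rmult_0_l (/ perp_norm2 (x t) (y t) (z t))). apply Rmult_lt_compat_r; auto. }
  pose proof (wind_int p1 p2 dp1 dp2 om T HT Hd1 Hd2 Hc HNp Hom) as HW.
  assert (HpT : forall f, f = x \/ f = y \/ f = z -> f T = f 0).
  { intros f Hf. destruct (Hp 0) as [e1 [e2 e3]]. rewrite Rplus_0_l in e1, e2, e3.
    destruct Hf as [->|[->| ->]]; auto. }
  specialize (HW ltac:(unfold p1; rewrite (HpT x), (HpT y); auto)
                 ltac:(unfold p2; rewrite (HpT x), (HpT y), (HpT z); auto) Hneg).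
  assert (pr : Riemann_integrable om 0 T) by (apply continuity_implies_RiemannInt; [lra| intros; auto]).
  exists pr. rewrite <- (RInt_Reals om 0 T pr).
  pose proof PI_RGT_0.
  apply (Rmult_le_reg_r (2*PI)); [lra|]. unfold Rdiv. rewrite Rmult_assoc, Rinv_l by lra. lra.
Qed.

Theorem corollary2 :
  (forall mu : R, -1 < mu <= 55 / 100 ->
     (forall x y z : R -> R, periodic_solution mu x y z ->
        forall t : R, in_K mu (x t) (y t) (z t)) /\
     (forall x y z : R -> R, periodic_solution mu x y z -> ~ stationary x y z ->
        forall t : R, in_K mu (x t) (y t) (z t) /\ ~ in_Delta (x t) (y t) (z t)) /\
     (forall (x y z : R -> R) (T : R),
        is_solution mu x y z -> ~ stationary x y z -> minimal_period x y z T ->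
        exists pr : Riemann_integrable (dtheta_along mu x y z) 0 T,
          RiemannInt pr / (2 * PI) <= -1)) /\
  (forall x y z : R -> R, periodic_solution (-1) x y z -> stationary x y z).
Proof.
  split.
  - intros mu Hmu. split; [|split].
    + intros x y z Hps. apply part1; auto.
    + intros x y z Hps Hns. apply part2; auto.
    + intros x y z T Hs Hns Hmp. apply part3; auto.
  - intros x y z Hps. apply case_m1; auto.
Qed.
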